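(* Let $G$ be a graph, let $\epsilon,\epsilon'$ be positive constants with $\epsilon+\epsilon'<1/2$, let $K$ be a set of nodes that is $\epsilon$-almost-clique-like, and let $T$ be the $i$-th bucket of a $k$-bucketing of $K$ which is $\epsilon'$-almost-clique-preserved. Then $|T|\in(1\pm 2(\epsilon+\epsilon'))|K|/k$, and $T$ is $2(\epsilon+\epsilon')$-almost-clique-like.
   Context: $N(v)$ is the set of neighbors of $v$ in $G$. For $\epsilon\in(0,1/2)$, a set of nodes $K$ is $\epsilon$-almost-clique-like if $|N(v)\cap K|\ge(1-\epsilon)|K|$ for all $v\in K$. A $k$-bucketing of $K$ is an assignment of a value $t(v)\in[k]$ to each $v\in K$, defining buckets $T_j=\{v\in K: t(v)=j\}$ for $j\in[k]$. The bucketing $\epsilon'$-almost-clique-preserves its $i$-th bucket $T_i$ if for every $v\in K$, $|N(v)\cap T_i|\in(1\pm\epsilon')|N(v)\cap K|/k$. The notation $x\in(1\pm\delta)y$ means $(1-\delta)y\le x\le(1+\delta)y$. *)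

(* Defs.v *)
From HB Require Import structures.
From mathcomp Require Import all_boot all_order all_algebra.
Set Implicit Arguments. Unset Strict Implicit. Unset Printing Implicit Defensive.
Import Order.TTheory GRing.Theory Num.Theory.
Local Open Scope ring_scope.

Definition simple_graph (V : finType) (adj : rel V) : Prop :=
  symmetric adj /\ irreflexive adj.

Definition nbhd (V : finType) (adj : rel V) (v : V) : {set V} :=
  [set u | adj v u].

Definition in_pm (R : numDomainType) (x d y : R) : Prop :=
  (1 - d) * y <= x /\ x <= (1 + d) * y.

Definition almost_clique_like (R : numDomainType) (V : finType) (adj : rel V)
  (eps : R) (K : {set V}) : Prop :=
  forall v, v \in K -> (1 - eps) * #|K|%:R <= #|nbhd adj v :&: K|%:R.

Definition bucket (V : finType) (k : nat) (K : {set V}) (t : V -> 'I_k)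
  (j : 'I_k) : {set V} :=
  [set v in K | t v == j].

Definition clique_preserves (R : numFieldType) (V : finType) (adj : rel V)
  (eps' : R) (k : nat) (K : {set V}) (t : V -> 'I_k) (i : 'I_k) : Prop :=
  forall v, v \in K ->
    in_pm #|nbhd adj v :&: bucket K t i|%:R eps' (#|nbhd adj v :&: K|%:R / k%:R).

(* Main.v *)
Require Import Defs.
From HB Require Import structures.
From mathcomp Require Import all_boot all_order all_algebra.
From mathcomp Require Import ring lra.
Import Order.TTheory GRing.Theory Num.Theory.
Local Open Scope ring_scope.

Lemma card_nbI (V : finType) (adj : rel V) v (B : {set V}) :
  #|nbhd adj v :&: B| = (\sum_(u in B) (adj v u : nat))%N.
Proof.
rewrite -sum1_card big_mkcond /= [RHS]big_mkcond /=; apply: eq_bigr => u _.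
by rewrite !inE; case: (adj v u); case: (u \in B).
Qed.

Lemma dcount (V : finType) (adj : rel V) (K T : {set V}) : symmetric adj ->
  (\sum_(v in K) #|nbhd adj v :&: T| = \sum_(u in T) #|nbhd adj u :&: K|)%N.
Proof.
move=> sym.
under eq_bigr do rewrite card_nbI.
under [RHS]eq_bigr do rewrite card_nbI.
rewrite exchange_big /=; apply: eq_bigr => u _; apply: eq_bigr => v _.
by rewrite sym.
Qed.

Theorem lemma4p6 (R : realFieldType) (V : finType) (adj : rel V)
  (eps eps' : R) (K : {set V}) (k : nat) (t : V -> 'I_k) (i : 'I_k) :
  simple_graph adj ->
  0 < eps -> 0 < eps' -> eps + eps' < 1 / 2 ->
  almost_clique_like adj eps K ->
  clique_preserves adj eps' K t i ->
  in_pm #|bucket K t i|%:R (2 * (eps + eps')) (#|K|%:R / k%:R) /\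
  almost_clique_like adj (2 * (eps + eps')) (bucket K t i).
Proof.
move=> [sym irr] he he' hs hK hP.
set T := bucket K t i.
have kpos : (0 < k)%N by apply: leq_ltn_trans (ltn_ord i).
have kk : (0 : R) < k%:R by rewrite ltr0n.
set x := #|K|%:R / k%:R.
have TK : T \subset K by apply/subsetP => u; rewrite inE => /andP[].
have cTK : (#|T| <= #|K|)%N by apply: subset_leq_card.
have x0 : 0 <= x by rewrite divr_ge0 // ler0n.
have lowa : forall v, v \in K ->
   (1 - eps) * (1 - eps') * x <= #|nbhd adj v :&: T|%:R.
  move=> v vK; have [h1 _] := hP v vK; have h2 := hK v vK.
  have hy : (1 - eps) * x <= #|nbhd adj v :&: K|%:R / k%:R.
    by rewrite /x mulrA ler_pM2r // ?invr_gt0.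
  have e1 : 0 <= 1 - eps' by lra.
  move: h1 hy; set a := _%:R; set y := _ / _; nra.
have upa : forall v, v \in K ->
   #|nbhd adj v :&: T|%:R <= (1 + eps') * x.
  move=> v vK; have [_ h1] := hP v vK.
  apply: (le_trans h1); apply: ler_wpM2l; first lra.
  rewrite ler_pM2r ?invr_gt0 // ler_nat; apply: subset_leq_card.
  exact: subsetIr.
have H2 : (1 - eps) * (1 - eps') * x <= #|T|%:R.
  case: (set_0Vmem K) => [K0 | [v vK]].
    by rewrite /x K0 cards0 mul0r mulr0.
  apply: (le_trans (lowa v vK)); rewrite ler_nat; apply: subset_leq_card.
  exact: subsetIr.
have H1 : #|T|%:R * (1 - eps) <= (1 + eps') * x.
  case: (posnP #|K|) => [K0 | Kp].
    have -> : #|T| = 0%N by move: cTK; rewrite K0; case: #|T|.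
    by rewrite mul0r; apply: mulr_ge0 => //; lra.
  have Kr : (0 : R) < #|K|%:R by rewrite ltr0n.
  rewrite -(ler_pM2l Kr).
  have := @dcount V adj K T sym => /(congr1 (fun n : nat => n%:R : R)).
  rewrite !natr_sum => hd.
  apply: (@le_trans _ _ (\sum_(v in K) (#|nbhd adj v :&: T|%:R : R))).
    rewrite hd mulrCA -(sum1_card (mem T)) natr_sum mulr_suml.
    apply: ler_sum => u uT.
    have uK : u \in K by apply: (subsetP TK).
    have := hK u uK; rewrite mul1r; lra.
  rewrite -(sum1_card (mem K)) natr_sum mulr_suml; apply: ler_sum => v vK.
  by rewrite mul1r; apply: upa.
split.
  split.
    apply: (le_trans _ H2); apply: ler_wpM2r => //; nra.
  have e1 : 0 < 1 - eps by lra.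
  rewrite -(ler_pM2r e1); apply: (le_trans H1).
  rewrite mulrAC; apply: ler_wpM2r => //; nra.
move=> v vT; have vK : v \in K by apply: (subsetP TK).
apply: (le_trans _ (lowa v vK)).
have e1 : 0 < 1 - eps by lra.
rewrite -(ler_pM2r e1).
have hh : 0 <= 1 - 2 * (eps + eps') by lra.
apply: (@le_trans _ _ ((1 - 2 * (eps + eps')) * ((1 + eps') * x))).
  by rewrite -mulrA; apply: ler_wpM2l.
have P : 0 <= (1 - eps) * (1 - eps') * (1 - eps) - (1 - 2 * (eps + eps')) * (1 + eps').
  have -> : (1 - eps) * (1 - eps') * (1 - eps) - (1 - 2 * (eps + eps')) * (1 + eps')
     = eps ^+ 2 * (1 - eps') + 2 * eps' * (eps + eps') + 2 * eps * eps' by ring.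
  have : 0 <= eps ^+ 2 * (1 - eps') by apply: mulr_ge0; [apply: sqr_ge0 | lra].
  nra.
have := mulr_ge0 P x0; rewrite mulrBl; lra.
Qed.
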